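(* Let $(E,C)$ be a finite bipartite separated graph. If $(E,C)$ has the Linking Property, then $\theta^{(E,C)}$ is topologically transitive. If $\Omega(E,C)$ is a Cantor space (has no isolated points), the converse also holds.
   Context: Separated graph $(E,C)$: $E=(E^0,E^1,r,s)$, $C=\bigsqcup_vC_v$ with $C_v$ a partition of $r^{-1}(v)$ into non-empty sets; $X_e$ is the element of $C$ containing $e$. Finite bipartite: $E$ finite, $E^0=E^{0,0}\sqcup E^{0,1}$, $s(E^1)=E^{0,1}$, $r(E^1)=E^{0,0}$. Admissible paths: words $\sigma_m\cdots\sigma_1$ in $E^1\sqcup(E^1)^{-1}$ forming a path in the double graph ($e^{-1}$ goes from $r(e)$ to $s(e)$; paths are read right to left) with no subword $ef^{-1}$ with $e=f$ and no subword $e^{-1}f$ with $X_e=X_f$; vertices are trivial admissible paths. $\mathfrak t_d(\alpha)$ denotes the terminal (leftmost) letter of a non-trivial admissible path. Configuration space: $\mathbb F$ = free group on $E^1$; $\Omega(E,C)$ = set of $\xi\subseteq\mathbb F$ with $1\in\xi$, right-convex (if a reduced word $e_m^{\varepsilon_m}\cdots e_1^{\varepsilon_1}\in\xi$ then $e_k^{\varepsilon_k}\cdots e_1^{\varepsilon_1}\in\xi$ for $k<m$), and such that for every $\alpha\in\xi$ the set $\xi_\alpha=\{\sigma:\sigma\alpha\in\xi\}$ equals $s^{-1}(v)$ for some $v\in E^{0,1}$ or $\{e_X^{-1}:X\in C_v\}$ for some $v\in E^{0,0}$, $e_X\in X$; topology from $\{0,1\}^{\mathbb F}$; $\theta^{(E,C)}$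 has domains $\Omega(E,C)_\alpha=\{\xi:\alpha^{-1}\in\xi\}$ and $\theta_\alpha(\xi)=\xi\alpha^{-1}$. Balls: for $n\ge1$, $\xi^n=\{\alpha\in\xi:|\alpha|\le n\}$, $\mathcal B_n(\Omega(E,C))=\{\xi^n:\xi\in\Omega(E,C)\}$, $\mathcal B(\Omega(E,C))=\bigcup_{n\ge1}\mathcal B_n$. The boundary of a ball $B$ is $\partial B=\{\mathfrak t_d(\alpha):\alpha\in B\text{ maximal}\}$, where $\alpha\in B$ is maximal if there is no $\sigma$ with $\sigma\alpha\in B$ and $|\sigma\alpha|>|\alpha|$. Two sets $A,A'\subseteq E^1\cup(E^1)^{-1}$ can be linked if there are $\sigma\in A$, $\sigma'\in A'$ and an admissible path $\alpha$ (possibly trivial) such that the concatenation $\sigma^{-1}\alpha\sigma'$ (without cancellation) is an admissible path. $(E,C)$ has the Linking Property if $\partial B$ and $\partial B'$ can be linked for any two balls $B,B'\in\mathcal B(\Omega(E,C))$. A partial action $\theta\colon G\curvearrowright\Omega$ (with $\Omega_g$ the domain of $\theta_{g^{-1}}$) is topologically transitive if for any non-empty open $U,U'\subseteq\Omega$ there is $g\in G$ with $\theta_g(U\cap\Omega_{g^{-1}})\cap U'\ne\emptyset$. *)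

(* Defs.v *)
From mathcomp Require Import all_boot.
Set Implicit Arguments. Unset Strict Implicit. Unset Printing Implicit Defensive.

(* A separated graph (E,C): finite vertex type, finite edge type, source and
   range maps, and C given as a family of sets of edges (global partition of
   E^1 whose blocks lie in single fibres r^{-1}(v); see lemma9's hypotheses). *)
Record sgraph := SGraph {
  vtx : finType;
  edg : finType;
  src : edg -> vtx;
  rng : edg -> vtx;
  sep : {set {set edg}} }.

Section SG.
Variable G : sgraph.

(* letters of E^1 ⊔ (E^1)^{-1}: (e,false) = e, (e,true) = e^{-1} *)
Definition letter := (edg G * bool)%type.
(* words are stored in written order: [:: s_m; ...; s_1] represents s_m ... s_1 *)
Definition word := seq letter.

Definition flip (x : letter) : letter := (x.1, ~~ x.2).
Definition invw (w : word) : word := rev (map flip w).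

Definition cons_red (x : letter) (w : word) : word :=
  match w with
  | y :: w' => if y == flip x then w' else x :: w
  | [::] => [:: x]
  end.
Definition red (w : word) : word := foldr cons_red [::] w.
Definition mulw (a b : word) : word := red (a ++ b).

Definition reduced (w : word) : bool :=
  if w is x :: w' then path (fun x y => y != flip x) x w' else true.

Definition Cv (v : vtx G) : {set {set edg G}} :=
  [set X in sep G | X \subset [set e | rng e == v]].

Definition lsrc (x : letter) : vtx G := if x.2 then rng x.1 else src x.1.
Definition ltgt (x : letter) : vtx G := if x.2 then src x.1 else rng x.1.

(* x immediately to the left of y (paths are read right to left) *)
Definition adm_adj (x y : letter) : bool :=
  [&& lsrc x == ltgt y,
      ~~ [&& x.2 == false, y.2 == true & x.1 == y.1]
    & ~~ [&& x.2 == true, y.2 == false & pblock (sep G) x.1 == pblock (sep G) y.1]].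

(* non-trivial admissible paths (trivial ones are the vertices) *)
Definition admissible (w : word) : bool :=
  if w is x :: w' then path adm_adj x w' else false.

(* terminal (leftmost) letter *)
Definition td (x : letter) (w : word) : letter := head x w.

Section Omega.
Variable V0 : {set vtx G}.   (* E^{0,0}; E^{0,1} = ~: V0 *)

Definition config := word -> bool.

(* ξ_α = {σ : σα ∈ ξ} is s^{-1}(v) for some v ∈ E^{0,1}, or
   {e_X^{-1} : X ∈ C_v} for some v ∈ E^{0,0} and some choice e_X ∈ X *)
Definition local_ok (xi : config) (a : word) : Prop :=
  exists v : vtx G,
    (v \notin V0 /\
       forall sg : letter, xi (mulw [:: sg] a) = (sg.2 == false) && (src sg.1 == v))
    \/
    (v \in V0 /\
       exists S : {set edg G},
         (forall sg : letter, xi (mulw [:: sg] a) = (sg.2 == true) && (sg.1 \in S)) /\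
         S \subset [set e | rng e == v] /\
         (forall X, X \in Cv v -> #|S :&: X| = 1)).

Definition inOmega (xi : config) : Prop :=
  [/\ xi [::],
      (forall w, xi w -> reduced w),
      (forall w k, xi w -> xi (drop k w))
    & (forall a, xi a -> local_ok xi a)].

(* partial action: θ_α(ξ) = ξ α^{-1} = {γ : γα ∈ ξ}, defined when α ∈ ξ *)
Definition theta (a : word) (xi : config) : config :=
  fun g => reduced g && xi (mulw g a).

(* open subsets of Ω(E,C) for the topology induced from {0,1}^F *)
Definition Oopen (U : config -> Prop) : Prop :=
  (forall xi, U xi -> inOmega xi) /\
  (forall xi, U xi -> exists F : seq word,
     forall eta, inOmega eta -> (forall w, w \in F -> eta w = xi w) -> U eta).

Definition top_transitive : Prop :=
  forall U U' : config -> Prop, Oopen U -> Oopen U' ->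
    (exists xi, U xi) -> (exists xi, U' xi) ->
    exists (a : word) (xi : config), [/\ U xi, xi a & U' (theta a xi)].

Definition isolated (xi : config) : Prop :=
  inOmega xi /\ Oopen (fun eta => inOmega eta /\ eta =1 xi).

Definition ball (xi : config) (n : nat) : config :=
  fun a => xi a && (size a <= n).

Definition is_ball (B : config) : Prop :=
  exists (xi : config) (n : nat), [/\ inOmega xi, 1 <= n & B =1 ball xi n].

Definition maximal (B : config) (a : word) : Prop :=
  ~ exists sg : letter, B (mulw [:: sg] a) /\ size a < size (mulw [:: sg] a).

Definition boundary (B : config) (sg : letter) : Prop :=
  exists a : word, [/\ B a, maximal B a, a != [::] & td sg a = sg].

Definition linkable (A A' : letter -> Prop) : Prop :=
  exists (sg sg' : letter) (a : word),
    [/\ A sg, A' sg' & admissible (flip sg :: a ++ [:: sg'])].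

Definition linking_property : Prop :=
  forall B B', is_ball B -> is_ball B' -> linkable (boundary B) (boundary B').

End Omega.
End SG.

(* Main.v *)
Require Import Defs.
From mathcomp Require Import all_boot.
From Stdlib Require Import Classical Lia.
From mathcomp Require Import zify.
Set Implicit Arguments. Unset Strict Implicit. Unset Printing Implicit Defensive.

Section Free.
Variable G : sgraph.
Implicit Types (x y : letter G) (w u v a c p : word G).

Lemma flipK : involutive (@flip G).
Proof. by case=> e b; rewrite /flip /= negbK. Qed.

Lemma flip_eq x y : (y == flip x) = (x == flip y).
Proof. by apply/eqP/eqP => ->; rewrite flipK. Qed.

Lemma flip_neq x : (x == flip x) = false.
Proof. by case: x => e b; rewrite /flip /=; apply/eqP; case; case: b. Qed.

Lemma reduced_cons x w : reduced (x :: w) = reduced w && (if w is y :: _ then y != flip x else true).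
Proof. by case: w => [|y w] //=; rewrite andbC. Qed.

Lemma cons_red_reduced x w : reduced w -> reduced (cons_red x w).
Proof.
case: w => [|y w] //= H; case: ifP => [_|/negbT hy].
- by case: w H => //= z w /andP[].
- by rewrite /= hy.
Qed.

Lemma red_reduced w : reduced (red w).
Proof. elim: w => //= x w IH; exact: cons_red_reduced. Qed.

Lemma redK w : reduced w -> red w = w.
Proof.
elim: w => [//|x w IH] H /=.
have Hw : reduced w by move: H; rewrite reduced_cons => /andP[].
rewrite IH //; case: w H {IH Hw} => //= y w /andP[hy _].
by rewrite (negbTE hy).
Qed.

Lemma red_idem w : red (red w) = red w.
Proof. exact/redK/red_reduced. Qed.

Lemma cancel_red x w : reduced w -> cons_red (flip x) (cons_red x w) = w.
Proof.
case: w => [|y w] /= H; first by rewrite flipK eqxx.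
case: ifP => [/eqP Hy|_]; last by rewrite /= flipK eqxx.
case: w H => [|z w] /=; first by rewrite Hy.
move=> /andP[hz _]; rewrite Hy flipK in hz.
by rewrite flipK (negbTE hz) Hy.
Qed.

Lemma red_cat u v : red (u ++ v) = foldr (@cons_red G) (red v) u.
Proof. by rewrite /red foldr_cat. Qed.

Lemma foldr_red_reduced r u : reduced r -> reduced (foldr (@cons_red G) r u).
Proof. by move=> Hr; elim: u => //= x u IH; apply: cons_red_reduced. Qed.

Lemma foldr_cons_red x s r : reduced s -> reduced r ->
  foldr (@cons_red G) r (cons_red x s) = cons_red x (foldr (@cons_red G) r s).
Proof.
case: s => [|y s] Hs Hr //=.
case: ifP => [/eqP ->|_] //=.
have Hs' : reduced s by move: Hs; rewrite reduced_cons => /andP[].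
by have := cancel_red (flip x) (foldr_red_reduced s Hr); rewrite flipK.
Qed.

Lemma foldr_red r u : reduced r -> foldr (@cons_red G) r (red u) = foldr (@cons_red G) r u.
Proof.
move=> Hr; elim: u => //= x u IH.
by rewrite foldr_cons_red ?red_reduced // IH.
Qed.

Lemma red_redl u v : red (red u ++ v) = red (u ++ v).
Proof. by rewrite !red_cat foldr_red // red_reduced. Qed.

Lemma red_redr u v : red (u ++ red v) = red (u ++ v).
Proof. by rewrite !red_cat red_idem. Qed.

Lemma invw_cons x w : invw (x :: w) = invw w ++ [:: flip x].
Proof. by rewrite /invw /= rev_cons cats1. Qed.

Lemma invwK : involutive (@invw G).
Proof. by move=> w; rewrite /invw map_rev revK (mapK flipK). Qed.

Lemma invw_cat u v : invw (u ++ v) = invw v ++ invw u.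
Proof. by rewrite /invw map_cat rev_cat. Qed.

Lemma size_invw w : size (invw w) = size w.
Proof. by rewrite /invw size_rev size_map. Qed.

Lemma red_cancel0 p v : red (invw p ++ p ++ v) = red v.
Proof.
elim: p => [|x p IH] //=.
rewrite invw_cons -catA /= -red_redr /= cancel_red ?red_reduced //.
by rewrite red_redr.
Qed.

Lemma red_cancel u p v : red (u ++ invw p ++ p ++ v) = red (u ++ v).
Proof. by rewrite -red_redr red_cancel0 red_redr. Qed.

Lemma red_cancel' u p v : red (u ++ p ++ invw p ++ v) = red (u ++ v).
Proof. by rewrite -{1}(invwK p) red_cancel. Qed.

Lemma dec_red a c : reduced a -> reduced c ->
  exists a1 t c1, [/\ a = a1 ++ t, c = invw t ++ c1 & red (a ++ c) = a1 ++ c1].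
Proof.
move=> + Hc; elim: a => [|x a IH] Ha.
  by exists [::], [::], c; rewrite /= redK.
have Ha' : reduced a by move: Ha; rewrite reduced_cons => /andP[].
have [a1 [t [c1 [E1 E2 E3]]]] := IH Ha'.
rewrite /= E3.
case: a1 E1 E3 => [|y a1] E1 E3.
  case: c1 E2 E3 => [|z c1] E2 E3 /=.
    by exists [:: x], t, [::]; rewrite E1 E2.
  case: ifP => [/eqP Ez|_].
    exists [::], (x :: t), c1; split => //; first by rewrite E1.
    by rewrite E2 invw_cons -catA Ez.
  by exists [:: x], t, (z :: c1); rewrite E1.
move: Ha; rewrite E1 reduced_cons /= => /andP[_ hy].
rewrite (negbTE hy).
by exists [:: x, y & a1], t, c1.
Qed.

Lemma reduced_rcons s x : reduced (rcons s x) = reduced s && (if s is _ :: _ then x != flip (last x s) else true).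
Proof.
case: s => [|y s] //=.
by rewrite /reduced rcons_path.
Qed.

Lemma last_invw x w : last x (invw w) = if w is y :: _ then flip y else x.
Proof. by case: w => [|y w] //=; rewrite invw_cons cats1 last_rcons. Qed.

Lemma reduced_invw w : reduced w -> reduced (invw w).
Proof.
elim: w => [|x w IH] // H.
have Hw : reduced w by move: H; rewrite reduced_cons => /andP[].
rewrite invw_cons cats1 reduced_rcons IH //=.
case E: (invw w) => [|z s] //.
rewrite -E last_invw.
case: w H E {Hw IH} => [|y w] //.
rewrite reduced_cons => /andP[_ hy] _.
by rewrite flipK eq_sym.
Qed.

End Free.

Section Om.
Variable G : sgraph.
Variable V0 : {set vtx G}.
Hypothesis HC : partition (sep G) [set: edg G].
Hypothesis HCr : forall X, X \in sep G -> forall e f, e \in X -> f \in X -> rng e = rng f.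
Hypothesis Hs : [set src x | x : edg G] = ~: V0.
Hypothesis Hr : [set rng x | x : edg G] = V0.
Implicit Types (x y h : letter G) (w u a c p : word G) (xi : config G).

Lemma rng_V0 e : rng e \in V0.
Proof. by rewrite -Hr; apply/imsetP; exists e. Qed.
Lemma src_V0 e : (src e \in V0) = false.
Proof.
have : src e \in ~: V0 by rewrite -Hs; apply/imsetP; exists e.
by rewrite inE => /negbTE.
Qed.
Lemma rng_src (e f : edg G) : (rng e == src f) = false.
Proof. by apply/negbTE/eqP => E; have := rng_V0 e; rewrite E src_V0. Qed.

Lemma cover_T : cover (sep G) = [set: edg G].
Proof. by case/and3P: HC => /eqP. Qed.
Lemma triv_sep : trivIset (sep G). Proof. by case/and3P: HC. Qed.
Lemma set0_sep : set0 \notin sep G. Proof. by case/and3P: HC. Qed.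
Lemma mem_pb e : e \in pblock (sep G) e.
Proof. by rewrite mem_pblock cover_T inE. Qed.
Lemma pb_mem e : pblock (sep G) e \in sep G.
Proof. by apply: pblock_mem; rewrite cover_T inE. Qed.
Lemma pb_def X e : X \in sep G -> e \in X -> pblock (sep G) e = X.
Proof. move=> HX He; exact: def_pblock triv_sep HX He. Qed.
Lemma pb_Cv e : pblock (sep G) e \in Cv (rng e).
Proof.
rewrite /Cv inE pb_mem /=; apply/subsetP => f hf.
by rewrite inE (HCr (pb_mem e) hf (mem_pb e)).
Qed.
Lemma Cv_pb X v e : X \in Cv v -> e \in X -> pblock (sep G) e = X /\ rng e = v.
Proof.
rewrite /Cv inE => /andP[HX /subsetP HS] He; split; first exact: pb_def.
by move/HS: He; rewrite inE => /eqP.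
Qed.
Lemma card1_eq (A : {set edg G}) (a b : edg G) : #|A| = 1 -> a \in A -> b \in A -> a = b.
Proof.
move/eqP/cards1P => [c ->]; rewrite !inE => /eqP -> /eqP -> //.
Qed.

Lemma mulw1 sg a : reduced a -> mulw [:: sg] a = cons_red sg a.
Proof. by move=> Ha; rewrite /mulw /= redK. Qed.

Lemma local_ok_ext (x1 x2 : config G) a b :
  (forall sg, x1 (mulw [:: sg] a) = x2 (mulw [:: sg] b)) ->
  local_ok V0 x1 a -> local_ok V0 x2 b.
Proof.
rewrite /local_ok; move=> E [v [[hv H]|[hv [S [H1 [H2 H3]]]]]]; exists v.
- by left; split => // sg; rewrite -E.
- by right; split => //; exists S; split => // sg; rewrite -E.
Qed.

Lemma om_drop1 xi x w : inOmega V0 xi -> xi (x :: w) -> xi w.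
Proof. by case=> _ _ Hd _ H; have := Hd _ 1 H; rewrite /= drop0. Qed.

Lemma om_red xi w : inOmega V0 xi -> xi w -> reduced w.
Proof. by case=> _ Hr' _ _; apply: Hr'. Qed.

Lemma lsrcV0 x : (lsrc x \in V0) = x.2.
Proof. by case: x => e [] ; rewrite /lsrc /= ?rng_V0 ?src_V0. Qed.
Lemma ltgtV0 x : (ltgt x \in V0) = ~~ x.2.
Proof. by case: x => e [] ; rewrite /ltgt /= ?rng_V0 ?src_V0. Qed.

Lemma adm_red x y : adm_adj x y -> y != flip x.
Proof.
case: x y => e b [f c]; rewrite /adm_adj /flip /=.
case/and3P => _ H1 H2; apply/eqP; case => Ef Ec; subst f c.
by case: b H1 H2; rewrite /= eqxx.
Qed.

Lemma adm_sym x y : adm_adj x y = adm_adj (flip y) (flip x).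
Proof.
case: x y => e b [f c]; rewrite /adm_adj /flip /lsrc /ltgt /=.
by case: b; case: c => /=; rewrite ?(eq_sym (rng e)) ?(eq_sym (src e)) ?(eq_sym e) ?(eq_sym (pblock _ e)).
Qed.

Lemma om_adj xi x h w : inOmega V0 xi -> xi (x :: h :: w) -> adm_adj x h.
Proof.
move=> Hxi Hx; have Hw := om_drop1 Hxi Hx.
have Hw' := om_drop1 Hxi Hw.
have Rx := om_red Hxi Hx.
have hx : h != flip x by move: Rx; rewrite reduced_cons => /andP[].
have Rw := om_red Hxi Hw.
have Ef : xi (mulw [:: flip h] (h :: w)) by rewrite mulw1 //= flipK eqxx.
have Ex : xi (mulw [:: x] (h :: w)) by rewrite mulw1 //= (negbTE hx).
case: Hxi => _ _ _ Hloc; case: (Hloc _ Hw) => v [[hv H]|[hv [S [H1 [H2 H3]]]]].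
- move: Ef Ex; rewrite !H; clear H Hloc Hw Hw' Rw Hx Rx; case: x hx => e b; case: h => f c.
  rewrite /flip /= /adm_adj /lsrc /ltgt /= => hx /andP[/eqP Hc /eqP Hf] /andP[/eqP Hb /eqP He].
  move: Hc; rewrite Hb; case: c hx Hf => //= hx Hf _.
  rewrite He Hf eqxx andbT /=; apply/eqP => Eef; move: hx; by rewrite Hb Eef eqxx.
- move: Ef Ex; rewrite !H1; clear H1 Hloc Hw Hw' Rw Hx Rx; case: x hx => e b; case: h => f c.
  rewrite /flip /= /adm_adj /lsrc /ltgt /= => hx /andP[/eqP Hc Hf] /andP[/eqP Hb He].
  move: Hc; rewrite Hb; case: c hx Hf => //= hx Hf _.
  have /subsetP HS := H2.
  have /HS := He; rewrite inE => /eqP ->.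
  have /HS := Hf; rewrite inE => /eqP ->.
  rewrite eqxx /=; apply/negP => /eqP Hpb.
  have Hcv : pblock (sep G) f \in Cv v.
    by have := pb_Cv f; have /HS := Hf; rewrite inE => /eqP ->.
  have Ee : e \in S :&: pblock (sep G) f by rewrite inE He -Hpb mem_pb.
  have Ef' : f \in S :&: pblock (sep G) f by rewrite inE Hf mem_pb.
  have Eef := card1_eq (H3 _ Hcv) Ee Ef'.
  by move: hx; rewrite Hb Eef eqxx.
Qed.

Lemma om_adm xi w : inOmega V0 xi -> xi w -> w != [::] -> admissible w.
Proof.
move=> Hxi; elim: w => [|x w IH] // Hx _.
case: w IH Hx => [|h w] IH Hx //=.
rewrite (om_adj Hxi Hx) /=.
exact: (IH (om_drop1 Hxi Hx)).
Qed.

Lemma om_child xi h p r : inOmega V0 xi -> xi (h :: p) -> adm_adj r h ->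
  exists y, (y != flip h) && xi (y :: h :: p).
Proof.
move=> Hxi Hx Hadj.
have Rx := om_red Hxi Hx.
have Ef : xi (mulw [:: flip h] (h :: p)) by rewrite mulw1 //= flipK eqxx (om_drop1 Hxi Hx).
have Ey y : y != flip h -> xi (y :: h :: p) = xi (mulw [:: y] (h :: p)).
  by move=> hy; rewrite mulw1 //= -flip_eq (negbTE hy).
case: Hxi => _ _ _ Hloc; case: (Hloc _ Hx) => v [[hv H]|[hv [S [H1 [H2 H3]]]]].
- move: Ef; rewrite H; case: h Hx Rx Ey Hadj H => f c Hx Rx Ey Hadj H.
  case: r Hadj => e b; rewrite /flip /= /adm_adj /lsrc /ltgt /= => Hadj /andP[/eqP Hc /eqP Hf].
  case: c Hc Hx Rx Ey Hadj H => //= _ Hx Rx Ey Hadj H; move: Hadj.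
  case: b; first by rewrite rng_src.
  move=> /and3P[/eqP Hef Hne _].
  exists (e, false); have hy : (e, false) != (f, false).
    by apply/negP => /eqP [Eef]; move: Hne; rewrite Eef !eqxx.
  by rewrite hy /= Ey // H /= Hef Hf eqxx.
- move: Ef; rewrite H1; case: h Hx Rx Ey Hadj H1 => f c Hx Rx Ey Hadj H1.
  case: r Hadj => e b; rewrite /flip /= /adm_adj /lsrc /ltgt /= => Hadj /andP[/eqP Hc Hf].
  case: c Hc Hx Rx Ey Hadj H1 => //= _ Hx Rx Ey Hadj H1; move: Hadj.
  case: b; last by rewrite eq_sym rng_src.
  move=> /and3P[/eqP Hef _ Hpb]; rewrite /= in Hpb.
  have /subsetP HS := H2.
  have Hcv : pblock (sep G) e \in Cv v.
    by have := pb_Cv e; rewrite Hef; have /HS := Hf; rewrite inE => /eqP ->.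
  have : #|S :&: pblock (sep G) e| != 0 by rewrite H3.
  rewrite cards_eq0 => /set0Pn [g]; rewrite inE => /andP[gS gX].
  have [pbg _] := Cv_pb Hcv gX.
  exists (g, true); have hy : (g, true) != (f, true).
    by apply/negP => /eqP [Egf]; move: Hpb; rewrite -pbg Egf eqxx.
  by rewrite hy /= Ey // H1 /= gS.
Qed.


Lemma theta_om xi c : inOmega V0 xi -> xi c -> inOmega V0 (theta c xi).
Proof.
move=> Hxi Hc; have Rc := om_red Hxi Hc.
have T0 : theta c xi [::] by rewrite /theta /mulw /= redK.
have step : forall x g, theta c xi (x :: g) -> theta c xi g.
  move=> x g /andP[Rg Hg]; have Rg' : reduced g by move: Rg; rewrite reduced_cons => /andP[].
  apply/andP; split => //; move: Hg; rewrite /mulw /=.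
  have [g1 [t [c1 [E1 E2 E3]]]] := dec_red Rg' Rc.
  rewrite E3; case: g1 E1 E3 => [|y g1] E1 E3.
    move=> _; rewrite /=; case: Hxi => _ _ Hd _.
    by have := Hd _ (size (invw t)) Hc; rewrite E2 drop_size_cat.
  move: Rg; rewrite E1 /= => /andP[hy _]; rewrite (negbTE hy) => H.
  exact: om_drop1 Hxi H.
split => //.
- by move=> w /andP[].
- move=> w k; elim: k w => [|k IH] [|x w] //=.
  by move=> H; apply: IH; apply: step H.
- move=> a /andP[Ra Ha]; case: Hxi => _ _ _ Hloc.
  apply: (local_ok_ext _ (Hloc _ Ha)) => sg.
  by rewrite /theta /mulw red_reduced andTb red_redr red_redl catA.
Qed.

Definition side (r : letter G) (w : word G) := (w != [::]) && (last r w == r).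
Definition rglue (x1 x2 : config G) (r : letter G) : config G :=
  fun w => if side r w then x2 w else x1 w.

Lemma side_cons r x w : side r (x :: w) = if w is [::] then x == r else side r w.
Proof. by case: w => [|y w] //=. Qed.

Lemma side_drop r w k : side r (drop k w) -> side r w.
Proof.
elim: k w => [|k IH] [|x w] //=.
move/IH; rewrite side_cons; case: w {IH} => //.
Qed.

Lemma side_drop' r w k : side r w -> drop k w != [::] -> side r (drop k w).
Proof.
elim: k w => [|k IH] [|x w] //=.
rewrite side_cons; case: w IH => [|y w] IH //.
by move=> Hw Hd; apply: IH.
Qed.

Lemma rglue_om (x1 x2 : config G) r : inOmega V0 x1 -> inOmega V0 x2 -> x1 [:: r] -> x2 [:: r] ->
  inOmega V0 (rglue x1 x2 r).
Proof.
move=> H1 H2 h1 h2.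
have [n1 R1 D1 L1] := H1; have [n2 R2 D2 L2] := H2.
split.
- by [].
- by move=> w; rewrite /rglue; case: ifP => _; [apply: R2|apply: R1].
- move=> w k; rewrite /rglue; case: ifP => Sw Hw.
    case: ifP => Sd; first exact: D2.
    case E: (drop k w) => [|y d]; first by [].
    by move: Sd; rewrite -E side_drop' // E.
  by case: ifP => Sd; [move: (side_drop Sd); rewrite Sw | exact: D1].
- move=> a; rewrite /rglue; case: a => [|h a] /=.
    move=> _; apply: (local_ok_ext _ (L1 _ n1)) => sg.
    rewrite /mulw /= /side /=; case: ifP => // /eqP ->.
    by rewrite h1 h2.
  rewrite side_cons; case: ifP => Sa Ha.
    have Ra := R2 _ Ha.
    apply: (local_ok_ext _ (L2 _ Ha)) => sg; rewrite mulw1 //=.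
    case: ifP => _.
      case: a Sa Ra {Ha} => [|y a] Sa Ra; first by rewrite /= n1 n2.
      by move: Sa => /= ->.
    by rewrite side_cons /= side_cons Sa.
  have Ra := R1 _ Ha.
  apply: (local_ok_ext _ (L1 _ Ha)) => sg; rewrite mulw1 //=.
  case: ifP => _.
    case: a Sa Ra {Ha} => [|y a] Sa Ra; first by [].
    by move: Sa => /= ->.
  by rewrite side_cons /= side_cons Sa.
Qed.

Definition ch (d1 d2 : letter G) (e : edg G) : edg G :=
  if pblock (sep G) e == pblock (sep G) d1.1 then d1.1
  else if pblock (sep G) e == pblock (sep G) d2.1 then d2.1
  else odflt e [pick f in pblock (sep G) e].

Definition nbr (d1 d2 x : letter G) : bool :=
  if d1.2 then [&& x.2, rng x.1 == rng d1.1 & x.1 == ch d1 d2 x.1]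
  else ~~ x.2 && (src x.1 == src d1.1).

Lemma ch_in d1 d2 e : ch d1 d2 e \in pblock (sep G) e.
Proof.
rewrite /ch; case: ifP => [/eqP ->|_]; first exact: mem_pb.
case: ifP => [/eqP ->|_]; first exact: mem_pb.
by case: pickP => [f //|_]; rewrite /= mem_pb.
Qed.

Lemma ch_pb d1 d2 e f : pblock (sep G) e = pblock (sep G) f -> ch d1 d2 e = ch d1 d2 f.
Proof.
move=> E; rewrite /ch E; case: pickP => [g _ //|H].
by have := H f; rewrite mem_pb.
Qed.

Lemma nbr_d1 d1 d2 : nbr d1 d2 d1.
Proof. by rewrite /nbr /ch; case: ifP => H; rewrite ?H /= !eqxx ?andbT. Qed.

Lemma nbr_ok (xi : config G) a d1 d2 :
  (forall sg, xi (mulw [:: sg] a) = nbr d1 d2 sg) -> local_ok V0 xi a.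
Proof.
move=> H; rewrite /local_ok; case E: d1.2.
- exists (rng d1.1); right; split; first exact: rng_V0.
  exists [set e | (rng e == rng d1.1) && (e == ch d1 d2 e)]; split; last split.
  + by move=> [e b]; rewrite H /nbr E inE /=; case: b.
  + by apply/subsetP => e; rewrite !inE => /andP[->].
  + move=> X HX.
    case: (set_0Vmem X) => [X0|[x0 Hx0]].
      by move: HX; rewrite X0 /Cv inE (negbTE set0_sep).
    have [pbX rX] := Cv_pb HX Hx0.
    set c := ch d1 d2 x0.
    have cin : c \in X by rewrite -pbX ch_in.
    have [pbc rc] := Cv_pb HX cin.
    suff -> : [set e | (rng e == rng d1.1) && (e == ch d1 d2 e)] :&: X = [set c] by rewrite cards1.
    apply/setP => e; rewrite !inE; apply/idP/idP.
      case/andP => /andP[_ /eqP He] HeX; have [pbe _] := Cv_pb HX HeX.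
      by rewrite He /c; apply/eqP/ch_pb; rewrite pbe pbX.
    move/eqP ->; rewrite cin andbT rc eqxx /=; apply/eqP.
    by rewrite /c; apply: ch_pb; rewrite pbc pbX.
- exists (src d1.1); left; split; first by rewrite src_V0.
  by move=> [e b]; rewrite H /nbr E /=; case: b.
Qed.

Lemma nbr_adj x h : adm_adj x h -> nbr (flip h) x x.
Proof.
case: x h => e b [f c]; rewrite /adm_adj /nbr /flip /lsrc /ltgt /=.
case: c => /=.
  case: b => /=; first by rewrite rng_src.
  by move=> /and3P[].
case: b => /=; last by rewrite eq_sym rng_src.
case/andP => -> Hpb; rewrite /ch /= (negbTE Hpb) !eqxx.
by [].
Qed.

Section Chi.
Variable z : letter G.
Variable pi : word G.

Definition d1 (w : word G) : letter G := if w is h :: _ then flip h else last z pi.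
Definition d2 (w : word G) : letter G :=
  if (size w < size pi) && (drop (size pi - size w) pi == w)
  then nth z pi (size pi - size w).-1 else d1 w.

Fixpoint chi (w : word G) : bool :=
  if w is x :: w' then
    [&& chi w', (if w' is h :: _ then h != flip x else true) & nbr (d1 w') (d2 w') x]
  else true.

Lemma chi_reduced w : chi w -> reduced w.
Proof.
elim: w => [|x w IH] // H; rewrite reduced_cons; move: H => /= /and3P[Hw Hn _]; by rewrite IH //; case: w {IH Hw} Hn.
Qed.

Lemma chi_om : inOmega V0 chi.
Proof.
split.
- by [].
- exact: chi_reduced.
- move=> w k; elim: k w => [|k IH] [|x w] //=.
  by case/and3P => Hw _ _; apply: IH.
- move=> a Ha; apply: (nbr_ok (d1 := d1 a) (d2 := d2 a)) => sg.
  rewrite mulw1 ?chi_reduced //.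
  case: a Ha => [|h a] Ha //=.
  case: ifP => [/eqP Eh|Hn].
    have -> : sg = flip h by rewrite Eh flipK.
    have Ha' : chi a by case/and3P: Ha.
    by rewrite Ha' nbr_d1.
  by rewrite /=; move: Ha => /= ->; rewrite Hn.
Qed.

Lemma chi_pi : admissible pi -> forall k, chi (drop k pi).
Proof.
move=> Hadm.
suff H : forall m, m <= size pi -> chi (drop (size pi - m) pi).
  move=> k; case: (leqP (size pi) k) => Hk; first by rewrite drop_oversize.
  have := H (size pi - k) (leq_subr _ _); rewrite subKn //; exact: ltnW.
elim=> [|m IH] Hm; first by rewrite subn0 drop_size.
set k := size pi - m.+1.
have Hk : k < size pi by rewrite /k; case: (size pi) Hm => // n _; rewrite subSS ltnS leq_subr.
have Ek1 : k.+1 = size pi - m by rewrite /k subnSK.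
rewrite (drop_nth z Hk) /= Ek1 IH ?(ltnW Hm) //=.
have Hd2 : d2 (drop (size pi - m) pi) = nth z pi k.
  rewrite /d2 size_drop subKn ?(ltnW Hm) // Hm eqxx /=.
  by rewrite -Ek1.
rewrite Hd2.
have Hadj : forall j, j.+1 < size pi -> adm_adj (nth z pi j) (nth z pi j.+1).
  case: pi Hadm {IH Hm k Hk Ek1 Hd2} => [|p0 pr] //= Hp j Hj.
  by move/(pathP z): Hp => /(_ j Hj).
case E: (drop (size pi - m) pi) => [|h w] /=.
  have Em : m = 0.
    by move/eqP: E; rewrite -size_eq0 size_drop subKn ?(ltnW Hm) // => /eqP.
  have Ekl : k = (size pi).-1 by rewrite /k Em subn1.
  by rewrite Ekl nth_last nbr_d1.
have Hkk : k.+1 < size pi.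
  by rewrite ltnNge; apply/negP => Hc; move: E; rewrite -Ek1 drop_oversize.
have Eh : h = nth z pi k.+1 by move: E; rewrite -Ek1 (drop_nth z Hkk); case.
have Ha := Hadj k Hkk; rewrite -Eh in Ha.
by rewrite adm_red // nbr_adj.
Qed.

End Chi.

Lemma lastNE x y (s : word G) : s != [::] -> last x s = last y s.
Proof. by case: s. Qed.

Lemma red_cancelr u p : red (u ++ invw p ++ p) = red u.
Proof. by have := red_cancel u p [::]; rewrite !cats0. Qed.

Lemma red_cancelr' u p : red (u ++ p ++ invw p) = red u.
Proof. by have := red_cancel' u p [::]; rewrite !cats0. Qed.

Lemma red_mid u v w : red (u ++ red v ++ w) = red (u ++ v ++ w).
Proof. by rewrite red_cat red_redl -red_cat. Qed.

Lemma nat_fact1 (a b c : nat) : a + ((b + 1).+1 + c) <= c.+1 -> False.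
Proof. lia. Qed.

Lemma invw_inj : injective (@invw G).
Proof. exact: (can_inj (@invwK G)). Qed.

Lemma glue_agree (xi Phi : config G) p sg : inOmega V0 xi -> xi (sg :: p) -> Phi [:: sg] ->
  forall w, reduced w -> size w <= (size p).+1 ->
  rglue (theta p xi) Phi sg (mulw w (invw p)) = xi w.
Proof.
move=> Hxi Hx HP w Rw Hsz.
have Rp : reduced (sg :: p) := om_red Hxi Hx.
have Rp' : reduced p by move: Rp; rewrite reduced_cons => /andP[].
have Rip := reduced_invw Rp'.
have root : theta p xi (mulw w (invw p)) = xi w.
  rewrite /theta /mulw red_reduced /= red_redl -catA red_cancelr redK //.
rewrite /rglue; case: ifP => // Hside.
have [w1 [t [c1 [E1 E2 E3]]]] := dec_red Rw Rip.
move: Hside; rewrite /mulw E3.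
case: c1 E2 E3 => [|y c1] E2 E3.
  rewrite cats0 in E2; have Ept := invw_inj E2; subst t.
  rewrite cats0; case: w1 E1 E3 => [|y [|y' w1]] E1 E3 //.
    rewrite /side /= => /eqP Ey; subst y w.
    by rewrite HP Hx.
  by move: Hsz; rewrite E1 size_cat /= !addSn ltnS ltnNge leq_addl.
rewrite /side last_cat /= => /andP[_ /eqP Hl].
have : last sg (invw p) = sg by rewrite E2 last_cat /= Hl.
rewrite last_invw; case: p Hx Rp Rp' Rip E2 {E1 E3 Hsz root} => [|q p] Hx Rp _ _ E2.
  by have := congr1 size E2; rewrite size_cat /= addnS.
move=> Eq; move: Rp; rewrite reduced_cons -Eq flipK /=.
by rewrite eqxx andbF.
Qed.

Definition maxsz (F : seq (word G)) := foldr (fun w m => maxn (size w) m) 0 F.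

Lemma maxsz_ge F w : w \in F -> size w <= maxsz F.
Proof.
elim: F => [|u F IH] //=; rewrite in_cons => /orP[/eqP ->|/IH H].
  exact: leq_maxl.
exact: leq_trans H (leq_maxr _ _).
Qed.

Lemma adm_reduced w : admissible w -> reduced w.
Proof.
case: w => [|x w] //= H.
by apply: sub_path H => a b /adm_red.
Qed.

Lemma dir1 : linking_property V0 -> top_transitive V0.
Proof.
move=> HL U U' [HU1 HU2] [HU'1 HU'2] [xi Uxi] [xi' Uxi'].
have Hxi := HU1 _ Uxi; have Hxi' := HU'1 _ Uxi'.
have [F HF] := HU2 _ Uxi; have [F' HF'] := HU'2 _ Uxi'.
set n := maxn 1 (maxsz (F ++ F')).
have Hn : 1 <= n by apply: leq_maxl.
have HFn : forall w, w \in F ++ F' -> size w <= n.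
  by move=> w Hw; apply: leq_trans (maxsz_ge Hw) (leq_maxr _ _).
have Bl : is_ball V0 (ball xi n) by exists xi, n.
have Bl' : is_ball V0 (ball xi' n) by exists xi', n.
case: (HL _ _ Bl Bl') => sg [sg' [al [[be [Bb Mb Nb Tb]] [be' [Bb' Mb' Nb' Tb']] Hadm]]].
case: be Bb Mb Nb Tb => [|h p] // Bb Mb _ /= Eh; subst h.
case: be' Bb' Mb' Nb' Tb' => [|h p'] // Bb' Mb' _ /= Eh; subst h.
case/andP: Bb => Hbe Hsz; case/andP: Bb' => Hbe' Hsz'.
set pi := flip sg :: al ++ [:: sg'].
have Hpath : path (@adm_adj G) (flip sg) (al ++ [:: sg']) by [].
have [cc Hc] : exists cc : letter G, adm_adj (flip sg) cc.
  by case: (al) Hpath => [|a0 al'] /= /andP[H _]; eexists; exact: H.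
have Hr1 : adm_adj (flip cc) sg by rewrite adm_sym flipK in Hc.
have Hr2 : adm_adj (last (flip sg) al) sg'.
  by move: Hpath; rewrite cat_path /= andbT => /andP[].
have En : size (sg :: p) = n.
  apply/eqP; rewrite eqn_leq Hsz /= leqNgt; apply/negP => Hlt.
  have [y /andP[hy Hy]] := om_child Hxi Hbe Hr1.
  apply: Mb; exists y; rewrite mulw1 ?(om_red Hxi Hbe) //= -flip_eq (negbTE hy).
  by rewrite /ball Hy /= ltnS -ltnS.
have En' : size (sg' :: p') = n.
  apply/eqP; rewrite eqn_leq Hsz' /= leqNgt; apply/negP => Hlt.
  have [y /andP[hy Hy]] := om_child Hxi' Hbe' Hr2.
  apply: Mb'; exists y; rewrite mulw1 ?(om_red Hxi' Hbe') //= -flip_eq (negbTE hy).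
  by rewrite /ball Hy /= ltnS -ltnS.
set chi' := chi sg pi.
have Hchi : inOmega V0 chi' := chi_om sg pi.
have Hpi := @chi_pi sg pi Hadm.
have Edr : drop (size (flip sg :: al)) pi = [:: sg'] by rewrite /pi -cat_cons drop_size_cat.
have Cs' : chi' [:: sg'] by have := Hpi (size (flip sg :: al)); rewrite Edr.
have Rpi : reduced pi := adm_reduced Hadm.
have Rbe' : reduced (sg' :: p') := om_red Hxi' Hbe'.
have Rbe : reduced (sg :: p) := om_red Hxi Hbe.
have Hp : xi p := om_drop1 Hxi Hbe.
have Hp' : xi' p' := om_drop1 Hxi' Hbe'.
set psi1 := rglue (theta p' xi') chi' sg'.
have T1 : theta p' xi' [:: sg'] by rewrite /theta /mulw (redK Rbe').
have Hpsi1 : inOmega V0 psi1 by apply: rglue_om => //; exact: (theta_om Hxi' Hp').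
have Psi1pi : psi1 pi.
  rewrite /psi1 /rglue.
  have -> : side sg' pi by rewrite /side /pi /= cats1 last_rcons eqxx.
  by have := Hpi 0; rewrite drop0.
have Phi1 : theta pi psi1 [:: sg].
  rewrite /theta mulw1 //.
  have -> : cons_red sg pi = al ++ [:: sg'] by rewrite /pi /= eqxx.
  rewrite /psi1 /rglue.
  have -> : side sg' (al ++ [:: sg']) by rewrite /side cats1 last_rcons eqxx; case: (al).
  have E1 : drop 1 pi = al ++ [:: sg'] by rewrite /pi /= drop0.
  by apply/andP; split => //; rewrite -E1; exact: (Hpi 1).
set psi2 := rglue (theta p xi) (theta pi psi1) sg.
have T2 : theta p xi [:: sg] by rewrite /theta /mulw (redK Rbe).
have Hpsi2 : inOmega V0 psi2.
  by apply: rglue_om => //; apply: theta_om.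
set eta := theta (invw p) psi2.
set X := invw (pi ++ p').
set kappa := mulw X p.
have RX : reduced X.
  apply: reduced_invw; rewrite /pi /= -catA /reduced cat_path.
  move: Rpi; rewrite /pi /reduced cat_path => /andP[-> /=] /andP[-> _] /=.
  exact: Rbe'.
have A1 : forall w, size w <= n -> eta w = xi w.
  move=> w Hw; rewrite /eta /theta.
  case Rw: (reduced w); last first.
    by apply/esym/negbTE/negP => /(om_red Hxi); rewrite Rw.
  by rewrite /psi2 glue_agree //; move: Hw; rewrite -En.
have A2 : forall g, size g <= n -> theta kappa eta g = xi' g.
  move=> g Hg; rewrite /eta /theta /kappa.
  case Rg: (reduced g); last first.
    by apply/esym/negbTE/negP => /(om_red Hxi'); rewrite Rg.
  rewrite red_reduced /=.
  have -> : mulw (mulw g (mulw X p)) (invw p) = mulw g X.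
    by rewrite /mulw red_redl -catA red_mid -!catA catA red_cancelr'.
  have Hside : side sg (mulw g X).
    have [g1 [t [c1 [E1 E2 E3]]]] := dec_red Rg RX.
    rewrite /mulw E3.
    case: c1 E2 E3 => [|y c1] E2 E3.
      exfalso; move: Hg; rewrite E1 size_cat.
      have : size X = size t by rewrite E2 cats0 size_invw.
      rewrite /X size_invw size_cat /pi /= size_cat /= => Et.
      move: En'; rewrite /= => En'.
      rewrite -Et -En'; exact: nat_fact1.
    rewrite /side; apply/andP; split; first by case: (g1).
    rewrite last_cat /=.
    have : last sg X = sg by rewrite /X last_invw /pi /= flipK.
    by rewrite E2 last_cat /= => ->.
  rewrite /psi2 /rglue Hside /theta red_reduced /=.
  have -> : mulw (mulw g X) pi = mulw g (invw p').
    by rewrite /mulw red_redl /X invw_cat -!catA catA red_cancelr.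
  rewrite /psi1 glue_agree //; by move: Hg; rewrite -En'.
have Heta : inOmega V0 eta.
  apply: theta_om => //.
  have := A1 [::] (leq0n _); rewrite /eta /theta /mulw /= redK ?reduced_invw //.
    by case: Hxi => -> _ _ _.
  by move: Rbe; rewrite reduced_cons => /andP[].
have Hk : eta kappa.
  have := A2 [::] (leq0n _); rewrite /theta /mulw /= red_idem.
  by case: Hxi' => -> _ _ _.
exists kappa, eta; split => //.
- by apply: HF => // w Hw; apply: A1; apply: HFn; rewrite mem_cat Hw.
- apply: HF'; first exact: theta_om.
  by move=> w Hw; apply: A2; apply: HFn; rewrite mem_cat Hw orbT.
Qed.

Fixpoint wup (k : nat) : seq (word G) :=
  if k is k'.+1 then [::] :: [seq x :: w | x <- enum {: letter G}, w <- wup k']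
  else [:: [::]].

Lemma wup_mem w k : size w <= k -> w \in wup k.
Proof.
elim: k w => [|k IH] [|x w] //= Hw.
rewrite in_cons /=; apply: (allpairs_f (fun x w => x :: w)); first by rewrite mem_enum.
exact: IH.
Qed.

Lemma size_cons_red x r : size (cons_red x r) <= (size r).+1.
Proof. case: r => [|y r] //=; case: ifP => //= _; exact: leqW. Qed.

Lemma size_red w : size (red w) <= size w.
Proof. elim: w => //= x w IH; exact: leq_trans (size_cons_red _ _) _. Qed.

Lemma nonisol xi : inOmega V0 xi -> ~ isolated V0 xi -> forall F : seq (word G),
  exists eta, [/\ inOmega V0 eta, (forall w, w \in F -> eta w = xi w) & exists w, eta w != xi w].
Proof.
move=> Hxi Hiso F; apply: NNPP => Hn; apply: Hiso; split => //; split.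
  by move=> x [].
move=> x [Hx Ex]; exists F => eta He Hag; split => // w.
apply/eqP; apply/negPn/negP => Hne; apply: Hn.
exists eta; split => //; last by exists w.
by move=> w' Hw'; rewrite Hag // Ex.
Qed.

Lemma avoid (f : word G -> config G) (Bs : seq (word G)) :
  (forall xi, inOmega V0 xi -> ~ isolated V0 xi) ->
  forall xi (F : seq (word G)), inOmega V0 xi ->
  exists zeta, [/\ inOmega V0 zeta, (forall w, w \in F -> zeta w = xi w) &
    exists K, forall b : word G, b \in Bs -> exists w : word G, size w <= K /\ zeta w != f b w].
Proof.
move=> Hni; elim: Bs => [|b Bs IH] xi F Hxi.
  by exists xi; split => //; exists 0.
have [xi1 [w0 [H1 H2 H3]]] : exists xi1 w0,
    [/\ inOmega V0 xi1, (forall w, w \in F -> xi1 w = xi w) & xi1 w0 != f b w0].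
  case: (classic (exists w0, xi w0 != f b w0)) => [[w0 Hw0]|Hno].
    by exists xi, w0.
  have [eta [He Hag [w Hw]]] := nonisol Hxi (Hni _ Hxi) F.
  exists eta, w; split => //.
  have -> : f b w = xi w.
    by apply/esym/eqP; apply/negPn/negP => Hne; apply: Hno; exists w.
  exact: Hw.
have [zeta [Hz Hzag [K HK]]] := IH xi1 (w0 :: F) H1.
exists zeta; split => //.
  by move=> w Hw; rewrite Hzag ?in_cons ?Hw ?orbT // H2.
exists (maxn K (size w0)) => b'; rewrite in_cons => /orP[/eqP ->|Hb'].
  by exists w0; rewrite leq_maxr Hzag ?in_cons ?eqxx.
have [w [Hw Hne]] := HK _ Hb'.
by exists w; rewrite (leq_trans Hw (leq_maxl _ _)).
Qed.

Lemma adm_prefix x (s1 s2 : word G) : admissible (x :: s1 ++ s2) -> admissible (x :: s1).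
Proof. by rewrite /= cat_path => /andP[]. Qed.

Lemma adm_suffix (s1 s2 : word G) : s2 != [::] -> admissible (s1 ++ s2) -> admissible s2.
Proof.
case: s2 => [|y s2] // _; case: s1 => [|x s1] //=.
by rewrite cat_path => /andP[_] /= /andP[].
Qed.

Lemma geo x0 (q : word G) n n' : admissible q -> 1 <= n -> 1 <= n' -> n + n' <= size q ->
  admissible (nth x0 q n.-1 :: take (size q - n - n') (drop n q) ++ [:: nth x0 q (size q - n')]).
Proof.
move=> Hq Hn Hn' Hsz.
have E : drop n.-1 q = nth x0 q n.-1 :: take (size q - n - n') (drop n q) ++
    nth x0 q (size q - n') :: drop (size q - n').+1 q.
  rewrite (drop_nth x0); last by move: Hn Hn' Hsz; clear; lia.
  have -> : n.-1.+1 = n by case: (n) Hn.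
  congr (_ :: _).
  rewrite -(drop_nth x0); last by move: Hn Hn' Hsz; clear; lia.
  rewrite -{1}(cat_take_drop (size q - n - n') (drop n q)) drop_drop.
  by congr (_ ++ drop _ q); move: Hsz; clear; lia.
have Hq' : admissible (take n.-1 q ++ drop n.-1 q) by rewrite cat_take_drop.
have H2 : admissible (drop n.-1 q) by apply: (adm_suffix _ Hq'); rewrite E.
move: H2; rewrite E -cat_rcons -cats1; exact: adm_prefix.
Qed.

Lemma nth_invw x0 (a : word G) i : i < size a ->
  nth x0 (invw a) i = flip (nth x0 a (size a - i.+1)).
Proof.
move=> Hi; rewrite /invw nth_rev ?size_map // (nth_map x0) ?size_map //.
by move: Hi; clear; lia.
Qed.

Lemma dir2 : (forall xi, inOmega V0 xi -> ~ isolated V0 xi) -> top_transitive V0 ->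
  linking_property V0.
Proof.
move=> Hni HT B B' [xi [n [Hxi Hn EB]]] [xi' [n' [Hxi' Hn' EB']]].
have [zeta [Hz Hzag [K0 HK0]]] := avoid (fun b => theta b xi') (wup (n + n').-1) Hni (wup n) Hxi.
set K := maxn K0 n.
set D := n + n'.
pose U := fun eta => inOmega V0 eta /\ forall w : word G, size w <= K -> eta w = zeta w.
pose U' := fun eta => inOmega V0 eta /\ forall w : word G, size w <= K + D -> eta w = xi' w.
have OU : Oopen V0 U.
  split; first by move=> x [].
  move=> x [Hx Ex]; exists (wup K) => eta He Hag; split => // w Hw.
  by rewrite Hag ?wup_mem // Ex.
have OU' : Oopen V0 U'.
  split; first by move=> x [].
  move=> x [Hx Ex]; exists (wup (K + D)) => eta He Hag; split => // w Hw.
  by rewrite Hag ?wup_mem // Ex.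
have [a [eta [[He HeK] Ha [Hte HteK]]]] := HT U U' OU OU'
  (ex_intro _ zeta (conj Hz (fun _ _ => erefl))) (ex_intro _ xi' (conj Hxi' (fun _ _ => erefl))).
have Ra : reduced a := om_red He Ha.
have HexI : forall w, size w <= n -> eta w = xi w.
  move=> w Hw; rewrite HeK; last exact: leq_trans Hw (leq_maxr _ _).
  by apply: Hzag; apply: wup_mem.
have HD : D <= size a.
  rewrite leqNgt; apply/negP => Hlt.
  have Hb : invw a \in wup (n + n').-1.
    by apply: wup_mem; rewrite size_invw; move: Hlt; rewrite /D; clear; lia.
  have [w [Hw Hne]] := HK0 _ Hb.
  move: Hne; apply/negP; rewrite negbK; apply/eqP.
  rewrite /theta; case Rw: (reduced w); last first.
    by apply/negbTE/negP => /(om_red Hz); rewrite Rw.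
  rewrite /=.
  have Hwk : size w <= K := leq_trans Hw (leq_maxl _ _).
  rewrite -HeK // -HteK; last first.
    apply: leq_trans (size_red _) _; rewrite size_cat size_invw.
    by move: Hwk Hlt; clear; lia.
  by rewrite /theta red_reduced /= /mulw red_redl -catA red_cancelr redK.
have Hte_om : inOmega V0 (theta a eta) := theta_om He Ha.
set q := invw a.
have Hq : theta a eta q.
  rewrite /theta reduced_invw //= /mulw.
  have := red_cancel0 a [::]; rewrite cats0 => ->.
  by case: He => -> _ _ _.
have Sq : size q = size a by rewrite size_invw.
have Hpos : 0 < size a by apply: leq_trans HD; rewrite /D addn_gt0 Hn.
have Aq : admissible q.
  by apply: (om_adm Hte_om Hq); rewrite -size_eq0 Sq -lt0n.
have [x0 _] : exists x0 : letter G, true by move: Hpos; case: (a) => [|y s] // _; exists y.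
have Hlink := geo x0 Aq Hn Hn' (leq_trans HD (eq_leq (esym Sq))).
set sg := nth x0 a (size a - n).
have Eflip : nth x0 q n.-1 = flip sg.
  rewrite /q nth_invw; last by move: HD Hn; rewrite /D; clear; lia.
  by rewrite /sg (_ : (n.-1).+1 = n) //; move: Hn; clear; lia.
rewrite Eflip in Hlink.
set sg' := nth x0 q (size q - n') in Hlink.
set al := take (size q - n - n') (drop n q) in Hlink.
exists sg, sg', al; split => //.
- exists (drop (size a - n) a).
  have Sb : size (drop (size a - n) a) = n.
    by rewrite size_drop; move: HD; rewrite /D; clear; lia.
  have Hb : eta (drop (size a - n) a) by case: He => _ _ Hd _; apply: Hd.
  split.
  + by rewrite EB /ball -HexI ?Sb // Hb leqnn.
  + by case=> y [By Hlt]; move: By; rewrite EB /ball => /andP[_ Hss]; move: (leq_trans Hlt Hss); rewrite Sb ltnn.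
  + by rewrite -size_eq0 Sb -lt0n.
  + rewrite (drop_nth x0) //; by move: HD Hn; rewrite /D; clear; lia.
- exists (drop (size q - n') q).
  have Sb : size (drop (size q - n') q) = n'.
    by rewrite size_drop Sq; move: HD; rewrite /D; clear; lia.
  have Hb : theta a eta (drop (size q - n') q) by case: Hte_om => _ _ Hd _; apply: Hd.
  have Hb' : xi' (drop (size q - n') q).
    rewrite -HteK // Sb; by rewrite /D; clear; lia.
  split.
  + by rewrite EB' /ball Hb' Sb leqnn.
  + by case=> y [By Hlt]; move: By; rewrite EB' /ball => /andP[_ Hss]; move: (leq_trans Hlt Hss); rewrite Sb ltnn.
  + by rewrite -size_eq0 Sb -lt0n.
  + rewrite (drop_nth x0) //; rewrite Sq; by move: HD Hn'; rewrite /D; clear; lia.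
Qed.
End Om.

Theorem lemma9 (G : sgraph) (V0 : {set vtx G})
  (HC : partition (sep G) [set: edg G])
  (HCr : forall X, X \in sep G -> forall e f, e \in X -> f \in X -> rng e = rng f)
  (Hs : [set src x | x : edg G] = ~: V0)
  (Hr : [set rng x | x : edg G] = V0) :
  (linking_property V0 -> top_transitive V0) /\
  ((forall xi, inOmega V0 xi -> ~ isolated V0 xi) ->
     top_transitive V0 -> linking_property V0).
Proof.
split; first exact: (dir1 HC HCr Hs Hr).
by move=> Hni HT; apply: (dir2 HC HCr Hni HT).
Qed.
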